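(* Let $m,n$ be natural numbers. If the $n$-th term $G(n,m)$ of the Goodstein sequence $G(m)$ is $0$, then $n=2n_1$ for some natural number $n_1$, and the hereditary representation of $G(n_1-1,m)$ in base $n_1$ is $1\cdot n_1^{1}+0\cdot n_1^{0}$.
   Context: For a natural number base $b>1$, the hereditary representation $m\langle b\rangle$ of $m$ is $\sum_{i=0}^{l} a_i b^{i}$ with $0\le a_i<b$, $a_l\ne0$, each exponent itself written in hereditary representation in base $b$, recursively. $m\langle b\rangle''$ is obtained by syntactically replacing every $b$ by $b+1$ in $m\langle b\rangle$. The Goodstein sequence $G(m)=\{m, m''-1, (m''-1)''-1,\dots\}$ starts from $m$ in base $2$; its $n$-th term is $G(n,m)$, with $G(1,m)=m$ in base $2$, $G(k,m)$ written in base $k+1$, and $G(k+1,m)=G(k,m)\langle k+1\rangle''-1$. *)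

(* Defs.v *)
From mathcomp Require Import all_boot.
Set Implicit Arguments. Unset Strict Implicit. Unset Printing Implicit Defensive.

(* A hereditary representation  sum_{i=0}^{l} a_i b^{e_i}  is a (little-endian)
   list of pairs (hereditary representation of the exponent e_i, digit a_i).
   The base b itself is left symbolic: evaluating at base c is the
   "syntactic replacement of b by c". *)
Inductive htm : Type := HNode of seq (htm * nat).

Fixpoint digits_aux (fuel b m : nat) : seq nat :=
  match fuel with
  | 0 => [::]
  | f.+1 => if m == 0 then [::] else (m %% b) :: digits_aux f b (m %/ b)
  end.
Definition digits (b m : nat) : seq nat := digits_aux m b m.

Fixpoint hrep_aux (fuel b m : nat) : htm :=
  match fuel with
  | 0 => HNode [::]
  | f.+1 =>
      let ds := digits b m in
      HNode [seq (hrep_aux f b p.1, p.2) | p <- zip (iota 0 (size ds)) ds]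
  end.
(* m<b> : hereditary representation of m in base b (meaningful for b > 1) *)
Definition hrep (b m : nat) : htm := hrep_aux m.+1 b m.

Fixpoint heval (c : nat) (t : htm) : nat :=
  let: HNode l := t in
  (fix go (l : seq (htm * nat)) : nat :=
     match l with
     | [::] => 0
     | (e, a) :: l' => a * c ^ heval c e + go l'
     end) l.

(* gaux m j = G(j+1, m) *)
Fixpoint gaux (m j : nat) : nat :=
  match j with
  | 0 => m
  | j'.+1 => heval j'.+3 (hrep j'.+2 (gaux m j')) - 1
  end.
(* G(n,m): G(1,m) = m, G(k+1,m) = G(k,m)<k+1>'' - 1 (defined for n >= 1) *)
Definition goodstein (n m : nat) : nat := gaux m n.-1.

(* the hereditary representation  1 * b^1 + 0 * b^0  (exponents 0 = empty sum,
   1 = 1 * b^0) *)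
Definition hrep_b1 : htm :=
  HNode [:: (HNode [::], 0); (HNode [:: (HNode [::], 1)], 1)].
Example ex3 : [seq goodstein k 3 | k <- iota 1 6] = [:: 3; 3; 3; 2; 1; 0].
Proof. by vm_compute. Qed.
Example ex3r : hrep 3 (goodstein 2 3) = hrep_b1.
Proof. by vm_compute. Qed.
Example ex4 : [seq goodstein k 4 | k <- iota 1 4] = [:: 4; 26; 41; 60].
Proof. by vm_compute. Qed.

(* Main.v *)
Require Import Defs.
From mathcomp Require Import all_boot zify.

Fixpoint sumv (c : nat) (F : nat -> nat) (s : nat) (ds : seq nat) : nat :=
  match ds with [::] => 0 | d :: ds' => d * c ^ F s + sumv c F s.+1 ds' end.

Lemma sumv_cons c F s d ds : sumv c F s (d :: ds) = d * c ^ F s + sumv c F s.+1 ds.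
Proof. by []. Qed.

Lemma go_sumv c (G : nat -> htm) s ds :
  heval c (HNode [seq (G p.1, p.2) | p <- zip (iota s (size ds)) ds])
  = sumv c (fun i => heval c (G i)) s ds.
Proof.
elim: ds s => [|d ds IH] s //=.
by rewrite -IH.
Qed.

Lemma hrepE c f b x : heval c (hrep_aux f.+1 b x) =
  sumv c (fun i => heval c (hrep_aux f b i)) 0 (digits b x).
Proof. by rewrite /= -go_sumv. Qed.

Lemma size_digits b g m : 1 < b -> size (digits_aux g b m) <= m.
Proof.
move=> hb; elim: g m => [|g IH] m //=.
case: eqP => [->|/eqP m0] //=.
have := IH (m %/ b); have : m %/ b < m by rewrite ltn_Pdiv // lt0n.
lia.
Qed.

Lemma expmono a c s t : 0 < a -> a <= c -> s <= t -> a ^ s <= c ^ t.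
Proof.
move=> a0 ac st; apply: leq_trans (leq_pexp2l a0 st) _.
case: t {st} => [|t]; first by rewrite !expn0.
by rewrite leq_exp2r.
Qed.

Lemma expstrict b c s t : 0 < b -> b < c -> 0 < s -> s <= t -> b ^ s < c ^ t.
Proof.
move=> b0 bc s0 st; apply: leq_trans (_ : c ^ s <= c ^ t).
  by rewrite ltn_exp2r.
by apply: leq_pexp2l => //; lia.
Qed.

Lemma sum_ge b c g m s F : 1 < b -> b <= c -> m <= g ->
  (forall j, s <= j < s + size (digits_aux g b m) -> j <= F j) ->
  m * b ^ s <= sumv c F s (digits_aux g b m).
Proof.
move=> hb hc; elim: g m s => [|g IH] m s.
  by rewrite leqn0 => /eqP ->.
move=> hm HF /=.
case: eqP => [->|/eqP m0] //=.
have hlt : m %/ b < m by rewrite ltn_Pdiv // lt0n.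
have HF' : forall j, s <= j < s + (size (digits_aux g b (m %/ b))).+1 -> j <= F j.
  by move: HF => /=; rewrite (negbTE m0).
have H1 := IH (m %/ b) s.+1 (ltnSE (leq_trans hlt hm)).
have H2 : (m %% b) * b ^ s <= (m %% b) * c ^ F s.
  apply: leq_mul => //. apply: expmono => //; first lia.
  apply: HF'; lia.
have H1' := H1 (fun j hj => HF' j (ltac:(lia))).
rewrite expnS mulnA in H1'.
rewrite {1}(divn_eq m b) mulnDl.
lia.
Qed.

Lemma sum_gt b c g m s F : 1 < b -> b < c -> m <= g -> 0 < m -> 0 < s ->
  (forall j, s <= j < s + size (digits_aux g b m) -> j <= F j) ->
  m * b ^ s < sumv c F s (digits_aux g b m).
Proof.
move=> hb hc; elim: g m s => [|g IH] m s.
  lia.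
move=> hm m0 s0 HF /=.
have m0' : (m == 0) = false by lia.
rewrite m0'.
have HF' : forall j, s <= j < s + (size (digits_aux g b (m %/ b))).+1 -> j <= F j.
  by move: HF => /=; rewrite m0'.
have hlt : m %/ b < m by rewrite ltn_Pdiv // lt0n.
have hF : s <= F s by apply: HF'; lia.
rewrite {1}(divn_eq m b) mulnDl.
case: (posnP (m %% b)) => r0.
  rewrite r0 /=.
  have mb0 : 0 < m %/ b by rewrite divn_gt0; [rewrite leqNgt; apply/negP => hh; move: r0; rewrite modn_small //; lia | lia].
  have := IH (m %/ b) s.+1 (ltnSE (leq_trans hlt hm)) mb0 isT (fun j hj => HF' j (ltac:(lia))).
  rewrite expnS mulnA; lia.
have H1 := @sum_ge b c g (m %/ b) s.+1 F hb (ltnW hc) (ltnSE (leq_trans hlt hm)) (fun j hj => HF' j (ltac:(lia))).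
rewrite expnS mulnA in H1.
have H2 : (m %% b) * b ^ s < (m %% b) * c ^ F s.
  by rewrite ltn_pmul2l //; apply: expstrict => //; lia.
rewrite /=; lia.
Qed.

Lemma heval_ge b c f j : 1 < b -> b <= c -> j < f -> j <= heval c (hrep_aux f b j).
Proof.
move=> hb hc; elim: f j => [|f IH] j //.
move=> jf; rewrite hrepE.
have := @sum_ge b c j j 0 (fun i => heval c (hrep_aux f b i)) hb hc (leqnn j).
rewrite muln1; apply=> i /andP [_ hi].
apply: IH; have := @size_digits _ j j hb; lia.
Qed.

Lemma heval_gt b c x : 1 < b -> b < c -> b <= x -> x < heval c (hrep b x).
Proof.
move=> hb hc hx; rewrite /hrep hrepE /digits.
case: x hx => [|x] hx; first lia.
rewrite (_ : digits_aux x.+1 b x.+1 = x.+1 %% b :: digits_aux x b (x.+1 %/ b)) // sumv_cons.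
have hlt : x.+1 %/ b < x.+1 by rewrite ltn_Pdiv.
have mb0 : 0 < x.+1 %/ b by rewrite divn_gt0; lia.
have := @sum_gt b c x (x.+1 %/ b) 1 (fun i => heval c (hrep_aux x.+1 b i)) hb hc (ltnSE hlt) mb0 (isT : 0 < 1).
have := @size_digits _ x (x.+1 %/ b) hb.
move=> hs H; have {H} H := H (fun j hj => @heval_ge b c x.+1 j hb (ltnW hc) (ltac:(lia))).
rewrite expn1 in H. have hd := divn_eq x.+1 b.
have : 0 < c ^ heval c (hrep_aux x.+1 b 0) by rewrite expn_gt0; apply/orP; left; lia.
nia.
Qed.

Lemma heval_small b c x : x < b -> heval c (hrep b x) = x.
Proof.
move=> hx; case: x hx => [|x] hx //.
rewrite /hrep /= /digits /= modn_small // divn_small //.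
case: x hx => [|x] hx /=; first by rewrite expn0 muln1 addn0.
by rewrite expn0 muln1 addn0.
Qed.

Lemma hrep_bb b : 1 < b -> hrep b b = hrep_b1.
Proof.
case: b => [|[|b]] // _.
rewrite /hrep /digits /= modnn divnn /= modn_small // divn_small //=.
by case: b.
Qed.

Theorem lemma6 (m n : nat) :
  1 < m -> 0 < n ->
  goodstein n m = 0 ->
  (forall k, 0 < k < n -> goodstein k m <> 0) ->
  exists n1 : nat,
    [/\ n = 2 * n1, 1 < n1 & hrep n1 (goodstein n1.-1 m) = hrep_b1].
Proof.
move=> hm hn hz hmin.
have step : forall j, gaux m j.+1 = heval j.+3 (hrep j.+2 (gaux m j)) - 1 by [].
have exP : exists j, gaux m j < j.+2 by exists n.-1; rewrite -/(goodstein n m) hz.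
case: (ex_minnP exP) => j0 Pj0 minj.
have below : forall j, j < j0 -> j.+2 <= gaux m j.
  by move=> j hj; rewrite leqNgt; apply/negP => /minj; lia.
case: j0 Pj0 minj below => [|i] Pj0 minj below; first by move: Pj0 => /=; lia.
have hx := below i (ltnSn i).
have hgt := @heval_gt i.+2 i.+3 (gaux m i) isT (ltnSn _) hx.
have ex : gaux m i = i.+2 by move: Pj0; rewrite step; lia.
have e1 : gaux m i.+1 = i.+2 by move: Pj0; rewrite step; lia.
have desc : forall t, t <= i.+2 -> gaux m (i.+1 + t) = i.+2 - t.
  elim=> [|t IH] ht; first by rewrite addn0 e1.
  rewrite addnS step IH; last lia.
  rewrite heval_small //; lia.
have hz' : gaux m n.-1 = 0 by [].
exists i.+2; split => //; last first.
  by rewrite /goodstein /= ex hrep_bb.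
case: (ltnP n.-1 i.+1) => h1.
  have := below _ h1; lia.
case: (ltnP n.-1 (i.+1 + i.+2)) => h2.
  have := desc (n.-1 - i.+1) ltac:(lia).
  rewrite subnKC //; lia.
case: (ltnP (i.+1 + i.+2) n.-1) => h3; last lia.
exfalso; apply: (hmin (i.+1 + i.+2).+1); first lia.
by have := desc i.+2 (leqnn _); rewrite subnn.
Qed.
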